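(* The canonical model $\mathcal{M}_c=(W_c,\leq_c,R_c,V^+_c,V^-_c)$ is a Nelsonian conditional model: $W_c\neq\emptyset$, $\leq_c$ is a preorder, $R_c$ is well defined (independent of the representative formula), and $R_c$ satisfies conditions (c1) and (c2).
   Context: $\mathcal{L}_{\Box\!\!\rightarrow}$ is built from propositional variables with $\wedge,\vee,\to$, strong negation $\sim$, and a binary would-conditional $\Box\!\!\rightarrow$; $\phi\Diamond\!\!\rightarrow\psi$ abbreviates $\sim(\phi\Box\!\!\rightarrow\sim\psi)$. Abbreviations: $\leftrightarrow$ is mutual $\to$; $\phi\Rightarrow\psi:=(\phi\to\psi)\wedge(\sim\psi\to\sim\phi)$; $\phi\Leftrightarrow\psi:=(\phi\Rightarrow\psi)\wedge(\psi\Rightarrow\phi)$. $\mathbb{N}4\mathbb{CK}$: modus ponens; positive intuitionistic schemes; $\sim\sim\phi\leftrightarrow\phi$, $\sim(\phi\wedge\psi)\leftrightarrow(\sim\phi\vee\sim\psi)$, $\sim(\phi\vee\psi)\leftrightarrow(\sim\phi\wedge\sim\psi)$, $\sim(\phi\to\psi)\leftrightarrow(\phi\wedge\sim\psi)$; (A1) $((\phi\Box\!\!\rightarrow\psi)\wedge(\phi\Box\!\!\rightarrow\chi))\Leftrightarrow(\phi\Box\!\!\rightarrow(\psi\wedge\chi))$; (A2) $(\sim(\phi\Box\!\!\rightarrow\psi)\wedge(\phi\Box\!\!\rightarrow\chi))\to\sim(\phi\Box\!\!\rightarrow(\psi\vee\sim\chi))$; (A3) $((\phi\Diamond\!\!\rightarrow\psi)\to(\phi\Box\!\!\rightarrow\chi))\to(\phi\Box\!\!\rightarrow(\psi\to\chi))$;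 (A4) $\phi\Box\!\!\rightarrow(\psi\to\psi)$; rules: from $\phi\Leftrightarrow\psi$ infer $(\phi\Box\!\!\rightarrow\chi)\Leftrightarrow(\psi\Box\!\!\rightarrow\chi)$; from $\phi\leftrightarrow\psi$ infer $(\chi\Box\!\!\rightarrow\phi)\leftrightarrow(\chi\Box\!\!\rightarrow\psi)$; from $\sim\phi\leftrightarrow\sim\psi$ infer $\sim(\chi\Box\!\!\rightarrow\phi)\leftrightarrow\sim(\chi\Box\!\!\rightarrow\psi)$. $\Gamma\vdash\Delta$ means some nonempty finite disjunction of members of $\Delta$ is derivable from $\Gamma$ and theorems by modus ponens. A bi-set $(\Gamma,\Delta)$ is maximal iff $\Gamma\not\vdash\Delta$ and $\Gamma\cup\Delta=\mathcal{L}_{\Box\!\!\rightarrow}$. Canonical model: $W_c$ is the set of maximal bi-sets; $(\Gamma_0,\Delta_0)\leq_c(\Gamma_1,\Delta_1)$ iff $\Gamma_0\subseteq\Gamma_1$; $((\Gamma_0,\Delta_0),(X,Y),(\Gamma_1,\Delta_1))\in R_c$ iff there is $\phi$ with $X=\{(\Gamma,\Delta)\in W_c\mid\phi\in\Gamma\}$, $Y=\{(\Gamma,\Delta)\in W_c\mid\sim\phi\in\Gamma\}$, $\{\psi\mid\phi\Box\!\!\rightarrow\psi\in\Gamma_0\}\subseteq\Gamma_1$, and $\{\sim(\phi\Box\!\!\rightarrow\psi)\mid\sim\psi\in\Gamma_1\}\subseteq\Gamma_0$; $V^+_c(p)=\{(\Gamma,\Delta)\in W_c\mid p\in\Gamma\}$,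 $V^-_c(p)=\{(\Gamma,\Delta)\in W_c\mid\sim p\in\Gamma\}$. A Nelsonian conditional model is $(W,\leq,R,V^+,V^-)$ with $W\neq\emptyset$, $\leq$ a preorder, $V^\pm$ assigning upward-closed sets, $R\subseteq W\times(\mathcal{P}(W)\times\mathcal{P}(W))\times W$ satisfying for all $X,Y$: (c1) $w\leq w'$ and $R_{(X,Y)}(w,v)$ imply $R_{(X,Y)}(w',v')$ for some $v'\geq v$; (c2) $R_{(X,Y)}(w,v)$ and $v\leq v'$ imply $R_{(X,Y)}(w',v')$ for some $w'\geq w$. *)

(* Defs.v *)
From Stdlib Require Import List RelationClasses.
Import ListNotations.

Inductive form : Type :=
| Var  : nat -> form
| And  : form -> form -> form
| Or   : form -> form -> form
| Imp  : form -> form -> form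
| Neg  : form -> form            (* strong negation ~ *)
| Cond : form -> form -> form.

Definition Might (a b : form) : form := Neg (Cond a (Neg b)).
Definition Iff (a b : form) : form := And (Imp a b) (Imp b a).
Definition SImp (a b : form) : form := And (Imp a b) (Imp (Neg b) (Neg a)).
Definition SIff (a b : form) : form := And (SImp a b) (SImp b a).

Inductive thm : form -> Prop :=
| ax_K  : forall a b, thm (Imp a (Imp b a))
| ax_S  : forall a b c, thm (Imp (Imp a (Imp b c)) (Imp (Imp a b) (Imp a c)))
| ax_AndE1 : forall a b, thm (Imp (And a b) a)
| ax_AndE2 : forall a b, thm (Imp (And a b) b)
| ax_AndI  : forall a b, thm (Imp a (Imp b (And a b)))
| ax_OrI1  : forall a b, thm (Imp a (Or a b))
| ax_OrI2  : forall a b, thm (Imp b (Or a b))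
| ax_OrE   : forall a b c, thm (Imp (Imp a c) (Imp (Imp b c) (Imp (Or a b) c)))
| ax_NN   : forall a, thm (Iff (Neg (Neg a)) a)
| ax_NAnd : forall a b, thm (Iff (Neg (And a b)) (Or (Neg a) (Neg b)))
| ax_NOr  : forall a b, thm (Iff (Neg (Or a b)) (And (Neg a) (Neg b)))
| ax_NImp : forall a b, thm (Iff (Neg (Imp a b)) (And a (Neg b)))
| ax_A1 : forall a b c,
    thm (SIff (And (Cond a b) (Cond a c)) (Cond a (And b c)))
| ax_A2 : forall a b c,
    thm (Imp (And (Neg (Cond a b)) (Cond a c)) (Neg (Cond a (Or b (Neg c)))))
| ax_A3 : forall a b c,
    thm (Imp (Imp (Might a b) (Cond a c)) (Cond a (Imp b c)))
| ax_A4 : forall a b, thm (Cond a (Imp b b))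
| r_MP : forall a b, thm (Imp a b) -> thm a -> thm b
| r_RA : forall a b c, thm (SIff a b) -> thm (SIff (Cond a c) (Cond b c))
| r_RC : forall a b c, thm (Iff a b) -> thm (Iff (Cond c a) (Cond c b))
| r_RCN : forall a b c, thm (Iff (Neg a) (Neg b)) ->
    thm (Iff (Neg (Cond c a)) (Neg (Cond c b))).

Inductive deriv (Gam : form -> Prop) : form -> Prop :=
| d_hyp : forall a, Gam a -> deriv Gam a
| d_thm : forall a, thm a -> deriv Gam a
| d_MP  : forall a b, deriv Gam (Imp a b) -> deriv Gam a -> deriv Gam b.

Fixpoint bigOr (a : form) (l : list form) : form :=
  match l with
  | [] => a
  | b :: l' => Or a (bigOr b l')
  end.

Definition bderiv (Gam Del : form -> Prop) : Prop :=
  exists a l, Del a /\ Forall Del l /\ deriv Gam (bigOr a l).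

Definition maximal (Gam Del : form -> Prop) : Prop :=
  ~ bderiv Gam Del /\ (forall a, Gam a \/ Del a).

Record mbs : Type := MBS {
  mG : form -> Prop;
  mD : form -> Prop;
  mmax : maximal mG mD }.

Definition Wc : Type := mbs.

Definition lec (w v : Wc) : Prop := forall a, mG w a -> mG v a.

Definition Rcond (phi : form) (w v : Wc) : Prop :=
  (forall psi, mG w (Cond phi psi) -> mG v psi) /\
  (forall psi, mG v (Neg psi) -> mG w (Neg (Cond phi psi))).

Definition Rc (w : Wc) (XY : (Wc -> Prop) * (Wc -> Prop)) (v : Wc) : Prop :=
  exists phi,
    fst XY = (fun u : Wc => mG u phi) /\
    snd XY = (fun u : Wc => mG u (Neg phi)) /\
    Rcond phi w v.

Definition Vpc (p : nat) (w : Wc) : Prop := mG w (Var p).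
Definition Vmc (p : nat) (w : Wc) : Prop := mG w (Neg (Var p)).

Definition Rc_well_defined : Prop :=
  forall phi phi' : form,
    (fun u : Wc => mG u phi) = (fun u : Wc => mG u phi') ->
    (fun u : Wc => mG u (Neg phi)) = (fun u : Wc => mG u (Neg phi')) ->
    forall w v : Wc, Rcond phi w v <-> Rcond phi' w v.

Definition upward_closed {W : Type} (le : W -> W -> Prop) (A : W -> Prop) : Prop :=
  forall w w', le w w' -> A w -> A w'.

Definition nelsonian_model (W : Type) (le : W -> W -> Prop)
  (R : W -> (W -> Prop) * (W -> Prop) -> W -> Prop)
  (Vp Vm : nat -> W -> Prop) : Prop :=
  inhabited W /\
  PreOrder le /\
  (forall p, upward_closed le (Vp p)) /\
  (forall p, upward_closed le (Vm p)) /\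
  (* (c1) *)
  (forall XY w w' v, le w w' -> R w XY v -> exists v', le v v' /\ R w' XY v') /\
  (* (c2) *)
  (forall XY w v v', R w XY v -> le v v' -> exists w', le w w' /\ R w' XY v').

(* Main.v *)
Require Import Defs.
From Stdlib Require Import List RelationClasses Classical Arith Lia.
Import ListNotations.

Definition addf (G : form -> Prop) (a : form) : form -> Prop := fun x => G x \/ x = a.
Definition E0 : form -> Prop := fun _ => False.

Lemma d_mono : forall G G' a, (forall x, G x -> G' x) -> deriv G a -> deriv G' a.
Proof. intros G G' a H D; induction D; [apply d_hyp; auto | apply d_thm; auto | eapply d_MP; eauto]. Qed.

Lemma thm_I a : thm (Imp a a).
Proof. exact (r_MP _ _ (r_MP _ _ (ax_S a (Imp a a) a) (ax_K a (Imp a a))) (ax_K a a)). Qed.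

Lemma deduction G a b : deriv (addf G a) b -> deriv G (Imp a b).
Proof.
  induction 1 as [x Hx|x Hx|x y _ IH1 _ IH2].
  - destruct Hx as [Hx| ->].
    + eapply d_MP; [apply d_thm, ax_K | apply d_hyp; exact Hx].
    + apply d_thm, thm_I.
  - eapply d_MP; [apply d_thm, ax_K| apply d_thm; exact Hx].
  - eapply d_MP; [eapply d_MP; [apply d_thm, ax_S | exact IH1] | exact IH2].
Qed.

Lemma thm_of a : deriv E0 a -> thm a.
Proof. induction 1; [contradiction | auto | eapply r_MP; eauto]. Qed.

Lemma thm_imp a b : deriv (addf E0 a) b -> thm (Imp a b).
Proof. intro; apply thm_of, deduction; auto. Qed.

Section ND.
Variable G : form -> Prop.
Lemma hyp a : deriv (addf G a) a. Proof. apply d_hyp; right; reflexivity. Qed.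
Lemma wk a b : deriv G b -> deriv (addf G a) b. Proof. apply d_mono; intros; left; auto. Qed.
Lemma T a : thm a -> deriv G a. Proof. apply d_thm. Qed.
Lemma mp a b : deriv G (Imp a b) -> deriv G a -> deriv G b. Proof. apply d_MP. Qed.
Lemma mpT a b : thm (Imp a b) -> deriv G a -> deriv G b. Proof. intros; eapply d_MP; [apply T|]; eauto. Qed.
Lemma and_i a b : deriv G a -> deriv G b -> deriv G (And a b).
Proof. intros; eapply mp; [eapply mp; [apply T, ax_AndI|]|]; eauto. Qed.
Lemma and_e1 a b : deriv G (And a b) -> deriv G a. Proof. apply mpT, ax_AndE1. Qed.
Lemma and_e2 a b : deriv G (And a b) -> deriv G b. Proof. apply mpT, ax_AndE2. Qed.
Lemma or_i1 a b : deriv G a -> deriv G (Or a b). Proof. apply mpT, ax_OrI1. Qed.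
Lemma or_i2 a b : deriv G b -> deriv G (Or a b). Proof. apply mpT, ax_OrI2. Qed.
Lemma or_e a b c : deriv G (Or a b) -> deriv (addf G a) c -> deriv (addf G b) c -> deriv G c.
Proof. intros H H1 H2. eapply mp; [eapply mp; [eapply mp; [apply T, ax_OrE| apply deduction, H1] | apply deduction, H2]|exact H]. Qed.
Lemma iffl a b : thm (Iff a b) -> deriv G a -> deriv G b.
Proof. unfold Iff; intros H; apply mp, and_e1 with (Imp b a), T, H. Qed.
Lemma iffr a b : thm (Iff a b) -> deriv G b -> deriv G a.
Proof. unfold Iff; intros H; apply mp, and_e2 with (Imp a b), T, H. Qed.
Lemma nn_e a : deriv G (Neg (Neg a)) -> deriv G a. Proof. apply iffl, ax_NN. Qed.
Lemma nn_i a : deriv G a -> deriv G (Neg (Neg a)). Proof. apply iffr, ax_NN. Qed.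
Lemma nand_e a b : deriv G (Neg (And a b)) -> deriv G (Or (Neg a) (Neg b)). Proof. apply iffl, ax_NAnd. Qed.
Lemma nand_i a b : deriv G (Or (Neg a) (Neg b)) -> deriv G (Neg (And a b)). Proof. apply iffr, ax_NAnd. Qed.
Lemma nor_e a b : deriv G (Neg (Or a b)) -> deriv G (And (Neg a) (Neg b)). Proof. apply iffl, ax_NOr. Qed.
Lemma nor_i a b : deriv G (And (Neg a) (Neg b)) -> deriv G (Neg (Or a b)). Proof. apply iffr, ax_NOr. Qed.
Lemma nimp_e a b : deriv G (Neg (Imp a b)) -> deriv G (And a (Neg b)). Proof. apply iffl, ax_NImp. Qed.
Lemma nimp_i a b : deriv G (And a (Neg b)) -> deriv G (Neg (Imp a b)). Proof. apply iffr, ax_NImp. Qed.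
End ND.

Lemma thm_and a b : thm a -> thm b -> thm (And a b).
Proof. intros; eapply r_MP; [eapply r_MP; [apply ax_AndI|]|]; eauto. Qed.
Lemma thm_iff a b : thm (Imp a b) -> thm (Imp b a) -> thm (Iff a b).
Proof. apply thm_and. Qed.

Lemma siff_parts x y : thm (SIff x y) ->
  thm (Imp x y) /\ thm (Imp y x) /\ thm (Imp (Neg y) (Neg x)) /\ thm (Imp (Neg x) (Neg y)).
Proof.
  unfold SIff, SImp; intro H; repeat split; apply thm_of.
  - eapply and_e1; eapply and_e1; apply T, H.
  - eapply and_e1; eapply and_e2; apply T, H.
  - eapply and_e2; eapply and_e1; apply T, H.
  - eapply and_e2; eapply and_e2; apply T, H.
Qed.

Lemma thm_siff x y : thm (Imp x y) -> thm (Imp y x) -> thm (Imp (Neg y) (Neg x)) -> thm (Imp (Neg x) (Neg y)) -> thm (SIff x y).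
Proof. intros; unfold SIff, SImp; repeat apply thm_and; auto. Qed.

Lemma cond_mono_neg a b b' : thm (Imp (Neg b) (Neg b')) -> thm (Imp (Neg (Cond a b)) (Neg (Cond a b'))).
Proof.
  intro H. apply thm_imp.
  destruct (siff_parts _ _ (ax_A1 a b b')) as (_ & _ & _ & H3).
  assert (Hi : thm (Iff (Neg (And b b')) (Neg b'))).
  { apply thm_iff; apply thm_imp.
    - eapply or_e; [apply nand_e, hyp | | apply hyp]. apply mpT with (Neg b); [apply H|apply hyp].
    - apply nand_i, or_i2, hyp. }
  eapply iffl; [apply (r_RCN _ _ a Hi)|].
  eapply mpT; [apply H3|]. apply nand_i, or_i1, hyp.
Qed.

Lemma cond_mono a b b' : thm (Imp b b') -> thm (Imp (Cond a b) (Cond a b')).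
Proof.
  intro H. apply thm_imp.
  destruct (siff_parts _ _ (ax_A1 a b b')) as (_ & H2 & _ & _).
  assert (Hi : thm (Iff b (And b b'))).
  { apply thm_iff; apply thm_imp.
    - apply and_i; [apply hyp| eapply mpT; [apply H|apply hyp]].
    - eapply and_e1, hyp. }
  eapply and_e2. eapply mpT; [apply H2|]. eapply iffl; [apply (r_RC _ _ a Hi)|]. apply hyp.
Qed.

Lemma cond_neg_split a b c : thm (Imp (Neg (Cond a (And b c))) (Or (Neg (Cond a b)) (Neg (Cond a c)))).
Proof.
  destruct (siff_parts _ _ (ax_A1 a b c)) as (_ & _ & H3 & _).
  apply thm_imp. apply nand_e. eapply mpT; [apply H3|apply hyp].
Qed.

Lemma thm_trans a b c : thm (Imp a b) -> thm (Imp b c) -> thm (Imp a c).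
Proof. intros; apply thm_imp; eapply mpT; [eauto|]; eapply mpT; [eauto|apply hyp]. Qed.

Lemma w_closed (m : mbs) a : deriv (mG m) a -> mG m a.
Proof.
  intros D. destruct (mmax m) as [Hn Ht]. destruct (Ht a) as [H|H]; auto.
  exfalso; apply Hn; exists a, []; repeat split; auto.
Qed.
Lemma w_disj (m : mbs) a : mG m a -> mD m a -> False.
Proof.
  intros H1 H2. destruct (mmax m) as [Hn Ht]. apply Hn; exists a, []; repeat split; auto.
  apply d_hyp; auto.
Qed.
Lemma w_notG (m : mbs) a : ~ mG m a -> mD m a.
Proof. intros H. destruct (mmax m) as [Hn Ht]. destruct (Ht a); tauto. Qed.
Lemma w_prime (m : mbs) a b : mG m (Or a b) -> mG m a \/ mG m b.
Proof.
  intros H. destruct (classic (mG m a)) as [|Ha]; auto. destruct (classic (mG m b)) as [|Hb]; auto.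
  exfalso. destruct (mmax m) as [Hn Ht]. apply Hn. exists a, [b].
  repeat split; [apply w_notG; auto | constructor; [apply w_notG; auto| constructor] | apply d_hyp; exact H].
Qed.
Lemma w_mp (m : mbs) a b : mG m (Imp a b) -> mG m a -> mG m b.
Proof. intros; apply w_closed; eapply d_MP; apply d_hyp; eauto. Qed.
Lemma w_thm (m : mbs) a : thm a -> mG m a.
Proof. intros; apply w_closed, d_thm; auto. Qed.
Lemma w_ti (m : mbs) a b : thm (Imp a b) -> mG m a -> mG m b.
Proof. intros; eapply w_mp; [apply w_thm|]; eauto. Qed.

Lemma bigOr_in G a l x : In x (a :: l) -> deriv G x -> deriv G (bigOr a l).
Proof.
  revert a; induction l as [|b l IH]; intros a Hin D; simpl in *.
  - destruct Hin as [->|[]]; auto.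
  - destruct Hin as [->|Hin]; [apply or_i1; auto| apply or_i2; apply (IH b); auto].
Qed.

Lemma bigOr_elim G a l c : deriv G (bigOr a l) -> (forall x, In x (a :: l) -> deriv (addf G x) c) -> deriv G c.
Proof.
  revert G a; induction l as [|b l IH]; intros G a D H; simpl in *.
  - eapply mp; [apply deduction, H|exact D]; auto.
  - eapply or_e; [exact D| apply H; auto|].
    apply (IH _ b); [apply hyp|]. intros x Hx.
    eapply d_mono; [|apply (H x); auto]. unfold addf; tauto.
Qed.

Lemma bderiv_mono G G' D D' : (forall x, G x -> G' x) -> (forall x, D x -> D' x) -> bderiv G D -> bderiv G' D'.
Proof.
  intros HG HD (a & l & Ha & Hl & Hd). exists a, l; repeat split; auto.
  - eapply Forall_impl; eauto.
  - eapply d_mono; eauto.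
Qed.

Lemma bderiv_closed G D : (forall a b, D a -> D b -> exists c, D c /\ thm (Imp a c) /\ thm (Imp b c)) ->
  bderiv G D -> exists c, D c /\ deriv G c.
Proof.
  intros Hc (a & l & Ha & Hl & Hd).
  assert (exists c, D c /\ forall x, In x (a :: l) -> thm (Imp x c)) as (c & Dc & Hx).
  { clear Hd; revert a Ha; induction Hl as [|b l Hb Hl IH]; intros a Ha.
    - exists a; split; auto. intros x [->|[]]; apply thm_I.
    - destruct (IH b Hb) as (c' & Dc' & Hx').
      destruct (Hc a c' Ha Dc') as (c & Dc & H1 & H2). exists c; split; auto.
      intros x [->|Hin]; auto. eapply thm_trans; [apply Hx'; auto| auto]. }
  exists c; split; auto. eapply bigOr_elim; [exact Hd|]. intros x Hin.
  eapply mpT; [apply Hx; exact Hin| apply hyp].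
Qed.

Lemma compact G c : deriv G c -> exists l, Forall G l /\ deriv (fun x => In x l) c.
Proof.
  induction 1 as [a Ha|a Ha|a b _ (l1 & F1 & D1) _ (l2 & F2 & D2)].
  - exists [a]; split; [constructor; auto| apply d_hyp; simpl; auto].
  - exists []; split; [constructor| apply d_thm; auto].
  - exists (l1 ++ l2); split; [apply Forall_app; auto|].
    eapply d_MP; eapply d_mono; try eassumption; intros; apply in_or_app; auto.
Qed.

Lemma split_deriv (P Q : form -> Prop) c : deriv (fun x => P x \/ Q x) c ->
  exists lq, Forall Q lq /\ deriv P (fold_right Imp c lq).
Proof.
  intros D. destruct (compact _ _ D) as (l & Fl & Dl). clear D.
  assert (Dl' : deriv (fun x => P x \/ In x l) c) by (eapply d_mono; [|exact Dl]; auto).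
  clear Dl. revert c Dl'; induction Fl as [|x l Hx Fl IH]; intros c Dl.
  - exists []; split; [constructor|]. simpl. eapply d_mono; [|exact Dl]. intros y [Hy|[]]; auto.
  - destruct Hx as [Hx|Hx].
    + apply IH. eapply d_mono; [|exact Dl]. intros y [Hy|[->|Hy]]; auto.
    + assert (D2 : deriv (fun y => P y \/ In y l) (Imp x c)).
      { apply deduction. eapply d_mono; [|exact Dl]. intros y [Hy|[->|Hy]]; unfold addf; auto. }
      destruct (IH _ D2) as (lq & Fq & Dq). exists (lq ++ [x]). split.
      * apply Forall_app; auto.
      * rewrite fold_right_app. exact Dq.
Qed.

Lemma cut_lemma G D a : bderiv (addf G a) D -> bderiv G (fun x => D x \/ x = a) -> bderiv G D.
Proof.
  intros (d1 & l1 & H1 & F1 & D1) (d2 & l2 & H2 & F2 & D2).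
  assert (exists l', Forall D l' /\ forall x, In x (d2 :: l2) -> x = a \/ In x l') as (l' & Fl' & Hl').
  { assert (F : Forall (fun x => D x \/ x = a) (d2 :: l2)) by (constructor; auto).
    clear D2 H2 F2. induction F as [|x l Hx F IH].
    - exists []; split; [constructor| intros _ []].
    - destruct IH as (l' & Fl' & Hl'). destruct (classic (D x)) as [Dx|nDx].
      + exists (x :: l'); split; [constructor; auto|]. intros y [->|Hy]; [right; left; auto|].
        destruct (Hl' y Hy); [left; auto| right; right; auto].
      + exists l'; split; auto. intros y [->|Hy]; auto. destruct Hx; [contradiction| auto]. }
  exists d1, (l1 ++ l'); split; [auto| split; [apply Forall_app; auto|]].
  eapply bigOr_elim; [exact D2|]. intros x Hx. destruct (Hl' x Hx) as [->|Hin].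
  - apply deduction in D1. eapply bigOr_elim; [eapply mp; [apply wk, D1| apply hyp]|].
    intros y Hy. apply (bigOr_in _ _ _ y); [| apply hyp].
    destruct Hy as [->|Hy]; [left; auto| right; apply in_or_app; auto].
  - apply (bigOr_in _ _ _ x); [right; apply in_or_app; auto| apply hyp].
Qed.

Fixpoint enum (n : nat) : list form :=
  match n with
  | 0 => [Var 0]
  | S n => Var (S n) :: enum n ++ map Neg (enum n) ++
      flat_map (fun x => flat_map (fun y => [And x y; Or x y; Imp x y; Cond x y]) (enum n)) (enum n)
  end.

Lemma enum_S n f : In f (enum n) -> In f (enum (S n)).
Proof. intros; simpl; right; apply in_or_app; auto. Qed.
Lemma enum_le m n f : m <= n -> In f (enum m) -> In f (enum n).
Proof. induction 1; auto using enum_S. Qed.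

Lemma enum_bin n x y : In x (enum n) -> In y (enum n) ->
  In (And x y) (enum (S n)) /\ In (Or x y) (enum (S n)) /\ In (Imp x y) (enum (S n)) /\ In (Cond x y) (enum (S n)).
Proof.
  intros Hx Hy.
  assert (H : forall z, In z [And x y; Or x y; Imp x y; Cond x y] -> In z (enum (S n))).
  { intros z Hz. simpl; right; apply in_or_app; right; apply in_or_app; right.
    apply in_flat_map; exists x; split; auto. apply in_flat_map; exists y; split; auto. }
  repeat split; apply H; simpl; tauto.
Qed.

Lemma enum_complete f : exists n, In f (enum n).
Proof.
  induction f as [k|x [n1 H1] y [n2 H2]|x [n1 H1] y [n2 H2]|x [n1 H1] y [n2 H2]|x [n H]|x [n1 H1] y [n2 H2]];
  try (exists (S (Nat.max n1 n2));
       destruct (enum_bin (Nat.max n1 n2) x y) as (A & B & C & D);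
       [eapply enum_le; [|exact H1]; lia| eapply enum_le; [|exact H2]; lia|]; tauto).
  - destruct k; [exists 0; simpl; auto| exists (S k); simpl; auto].
  - exists (S n); simpl; right; apply in_or_app; right; apply in_or_app; left; apply in_map; auto.
Qed.

Definition st := ((form -> Prop) * (form -> Prop))%type.
Definition step (s : st) (a : form) : st :=
  (fun x => fst s x \/ (x = a /\ ~ bderiv (addf (fst s) a) (snd s)),
   fun x => snd s x \/ (x = a /\ bderiv (addf (fst s) a) (snd s))).
Fixpoint chain (s0 : st) (n : nat) : st :=
  match n with 0 => s0 | S n => fold_left step (enum n) (chain s0 n) end.
Definition incl (s s' : st) := (forall x, fst s x -> fst s' x) /\ (forall x, snd s x -> snd s' x).
Definition cons_st (s : st) := ~ bderiv (fst s) (snd s).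

Lemma incl_trans s1 s2 s3 : incl s1 s2 -> incl s2 s3 -> incl s1 s3.
Proof. unfold incl; intuition. Qed.
Lemma fold_incl l s : incl s (fold_left step l s).
Proof.
  revert s; induction l as [|a l IH]; intros s; simpl.
  - split; auto.
  - eapply incl_trans; [|apply IH]. split; simpl; auto.
Qed.
Lemma chain_incl s0 m n : m <= n -> incl (chain s0 m) (chain s0 n).
Proof.
  induction 1; [split; auto|]. eapply incl_trans; [eassumption|]. simpl; apply fold_incl.
Qed.
Lemma step_cons s a : cons_st s -> cons_st (step s a).
Proof.
  unfold cons_st; intros Hc. destruct (classic (bderiv (addf (fst s) a) (snd s))) as [B|B].
  - intro B'. apply Hc. apply (cut_lemma _ _ a B).
    eapply bderiv_mono; [| |exact B']; simpl; intros x Hx; intuition.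
  - intro B'. apply B. eapply bderiv_mono; [| |exact B']; simpl; unfold addf; intros x Hx; intuition.
Qed.
Lemma fold_cons l s : cons_st s -> cons_st (fold_left step l s).
Proof. revert s; induction l; simpl; auto using step_cons. Qed.
Lemma chain_cons s0 n : cons_st s0 -> cons_st (chain s0 n).
Proof. induction n; simpl; auto using fold_cons. Qed.
Lemma fold_dec l s a : In a l -> fst (fold_left step l s) a \/ snd (fold_left step l s) a.
Proof.
  revert s; induction l as [|b l IH]; intros s Hin; simpl in *; [contradiction|].
  destruct Hin as [->|Hin]; auto.
  destruct (fold_incl l (step s a)) as [I1 I2].
  destruct (classic (bderiv (addf (fst s) a) (snd s))); [right; apply I2; simpl| left; apply I1; simpl]; auto.
Qed.

Lemma lindenbaum (G D : form -> Prop) : ~ bderiv G D ->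
  exists m : mbs, (forall x, G x -> mG m x) /\ (forall x, D x -> mD m x).
Proof.
  intros Hc. set (s0 := (G, D) : st).
  set (Gs := fun x => exists n, fst (chain s0 n) x).
  set (Ds := fun x => exists n, snd (chain s0 n) x).
  assert (Hmax : maximal Gs Ds).
  { split.
    - intros (a & l & Ha & Hl & Hd).
      assert (HD : exists n, deriv (fst (chain s0 n)) (bigOr a l)).
      { clear Ha Hl. induction Hd as [x [n Hx]|x Hx|x y _ [n1 H1] _ [n2 H2]].
        - exists n; apply d_hyp; auto.
        - exists 0; apply d_thm; auto.
        - exists (Nat.max n1 n2). eapply d_MP; eapply d_mono; try eassumption;
          apply chain_incl; lia. }
      assert (HF : exists n, Forall (snd (chain s0 n)) (a :: l)).
      { assert (F : Forall Ds (a :: l)) by (constructor; auto). clear -F. induction F as [|x l0 [n Hx] F [n' IH]].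
        - exists 0; constructor.
        - exists (Nat.max n n'). constructor.
          + eapply chain_incl; [|exact Hx]; lia.
          + eapply Forall_impl; [|exact IH]. apply chain_incl; lia. }
      destruct HD as [n1 H1], HF as [n2 H2].
      apply (chain_cons s0 (Nat.max n1 n2) Hc).
      inversion H2; subst. exists a, l; repeat split.
      + eapply chain_incl; [|eassumption]; lia.
      + eapply Forall_impl; [|eassumption]. apply chain_incl; lia.
      + eapply d_mono; [|exact H1]. apply chain_incl; lia.
    - intros a. destruct (enum_complete a) as [n Hn].
      destruct (fold_dec (enum n) (chain s0 n) a Hn); [left|right]; exists (S n); auto. }
  exists (MBS Gs Ds Hmax); simpl; split; intros x Hx; exists 0; auto.
Qed.

Lemma thm_of_sets a b : (forall m : mbs, mG m a -> mG m b) -> thm (Imp a b).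
Proof.
  intros H. apply NNPP; intro Hn.
  destruct (lindenbaum (fun x => x = a) (fun x => x = b)) as (m & H1 & H2).
  - intros (b' & l & Hb & Hl & Hd). apply Hn. apply thm_imp.
    eapply d_mono; [|eapply bigOr_elim; [exact Hd|]].
    + intros x ->; right; auto.
    + intros x Hx. assert (x = b) as ->.
      { destruct Hx as [->|Hx]; auto. rewrite Forall_forall in Hl; auto. }
      apply hyp.
  - apply (w_disj m b); [apply H, H1|apply H2]; auto.
Qed.

Lemma Rcond_transfer phi phi' (w v : Wc) :
  (forall psi, thm (Imp (Cond phi' psi) (Cond phi psi))) ->
  (forall psi, thm (Imp (Neg (Cond phi psi)) (Neg (Cond phi' psi)))) ->
  Rcond phi w v -> Rcond phi' w v.
Proof.
  intros H1 H2 [R1 R2]; split; intros psi Hp.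
  - apply R1. eapply w_ti; [apply H1|exact Hp].
  - eapply w_ti; [apply H2|]. apply R2, Hp.
Qed.

Lemma well_defined : Rc_well_defined.
Proof.
  intros phi phi' E1 E2.
  assert (S1 : forall u : Wc, mG u phi <-> mG u phi').
  { intro u. pose proof (f_equal (fun f => f u) E1) as K; simpl in K; rewrite K; tauto. }
  assert (S2 : forall u : Wc, mG u (Neg phi) <-> mG u (Neg phi')).
  { intro u. pose proof (f_equal (fun f => f u) E2) as K; simpl in K; rewrite K; tauto. }
  assert (HS : thm (SIff phi phi')).
  { apply thm_siff; apply thm_of_sets; intros m; firstorder. }
  intros w v; split; apply Rcond_transfer; intros psi;
  destruct (siff_parts _ _ (r_RA _ _ psi HS)) as (A & B & C & D); auto.
Qed.

Lemma c1_list phi (w' : Wc) delta lq : Forall (fun x => mG w' (Cond phi x)) lq ->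
  mG w' (Neg (Cond phi (Neg (fold_right Imp delta lq)))) -> mG w' (Neg (Cond phi (Neg delta))).
Proof.
  induction 1 as [|chi l Hc F IH]; simpl; intros H; auto.
  apply IH. set (X := fold_right Imp delta l) in *.
  assert (H2 : mG w' (Neg (Cond phi (Or (Neg (Imp chi X)) (Neg chi))))).
  { eapply w_mp; [apply w_thm, ax_A2|]. apply w_closed, and_i; apply d_hyp; auto. }
  eapply w_ti; [apply cond_mono_neg|exact H2].
  apply thm_imp. apply nn_i. pose proof (nor_e _ _ _ (hyp E0 (Neg (Or (Neg (Imp chi X)) (Neg chi))))) as K.
  eapply mp; [apply nn_e; eapply and_e1; exact K| apply nn_e; eapply and_e2; exact K].
Qed.

Lemma c1 phi (w w' v : Wc) : lec w w' -> Rcond phi w v -> exists v', lec v v' /\ Rcond phi w' v'.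
Proof.
  intros Hww [R1 R2].
  set (G' := fun x => mG v x \/ mG w' (Cond phi x)).
  set (D' := fun x => exists psi, x = Neg psi /\ ~ mG w' (Neg (Cond phi psi))).
  destruct (lindenbaum G' D') as (v' & HG & HD).
  - intro B. apply bderiv_closed in B.
    + destruct B as (c & (psi & -> & Hn) & Dc). apply Hn.
      destruct (split_deriv _ _ _ Dc) as (lq & Fq & Dq).
      apply w_closed in Dq. apply (w_ti _ _ _ (thm_imp _ _ (nn_i _ _ (hyp _ _)))) in Dq.
      apply R2, Hww in Dq. apply (c1_list _ _ _ _ Fq) in Dq.
      eapply w_ti; [apply cond_mono_neg|exact Dq]. apply thm_imp, nn_e, hyp.
    + intros a b (p1 & -> & H1) (p2 & -> & H2). exists (Neg (And p1 p2)). split; [|split].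
      * exists (And p1 p2); split; auto. intro H. apply (w_ti _ _ _ (cond_neg_split _ _ _)) in H.
        destruct (w_prime _ _ _ H); auto.
      * apply thm_imp, nand_i, or_i1, hyp.
      * apply thm_imp, nand_i, or_i2, hyp.
  - exists v'. split; [intros x Hx; apply HG; left; auto|]. split.
    + intros psi Hp; apply HG; right; auto.
    + intros psi Hp. apply NNPP; intro Hn. apply (w_disj v' (Neg psi)); auto.
      apply HD; exists psi; auto.
Qed.

Definition negs phi ks := map (fun psi => Neg (Cond phi psi)) ks.

Lemma A3L phi ks chi : thm (Imp (fold_right Imp (Cond phi chi) (negs phi ks)) (Cond phi (fold_right Imp chi (map Neg ks)))).
Proof.
  induction ks as [|psi ks IH]; simpl; [apply thm_I|].
  apply thm_imp. eapply mp; [apply T, ax_A3|]. apply deduction.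
  eapply mpT; [apply IH|]. eapply mp; [apply wk, hyp|].
  eapply iffl; [apply (r_RCN _ _ phi (ax_NN (Neg psi)))|]. unfold Might. apply hyp.
Qed.

Lemma c2 phi (w v v' : Wc) : Rcond phi w v -> lec v v' -> exists w', lec w w' /\ Rcond phi w' v'.
Proof.
  intros [R1 R2] Hvv.
  set (G' := fun x => mG w x \/ exists psi, x = Neg (Cond phi psi) /\ mG v' (Neg psi)).
  set (D' := fun x => exists psi, x = Cond phi psi /\ ~ mG v' psi).
  destruct (lindenbaum G' D') as (w' & HG & HD).
  - intro B. apply bderiv_closed in B.
    + destruct B as (c & (chi & -> & Hn) & Dc). apply Hn.
      destruct (split_deriv _ _ _ Dc) as (lq & Fq & Dq).
      apply w_closed in Dq.
      assert (exists ks, lq = negs phi ks /\ Forall (fun psi => mG v' (Neg psi)) ks) as (ks & -> & Fk).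
      { clear Dq. induction Fq as [|x l (psi & -> & Hp) F (ks & -> & Fk)].
        - exists []; auto.
        - exists (psi :: ks); split; auto. }
      apply (w_ti _ _ _ (A3L _ _ _)), R1, Hvv in Dq.
      clear -Fk Dq. induction Fk as [|psi ks Hp F IH]; simpl in *; auto.
      apply IH. eapply w_mp; eauto.
    + intros a b (p1 & -> & H1) (p2 & -> & H2). exists (Cond phi (Or p1 p2)). split; [|split].
      * exists (Or p1 p2); split; auto. intro H. destruct (w_prime _ _ _ H); auto.
      * apply cond_mono, thm_imp, or_i1, hyp.
      * apply cond_mono, thm_imp, or_i2, hyp.
  - exists w'. split; [intros x Hx; apply HG; left; auto|]. split.
    + intros psi Hp. apply NNPP; intro Hn. apply (w_disj w' (Cond phi psi)); auto.
      apply HD; exists psi; auto.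
    + intros psi Hp. apply HG; right; eauto.
Qed.

Lemma triv_max : maximal (fun _ => True) (fun _ => False).
Proof. split; auto. intros (a & _ & [] & _). Qed.

Theorem lemma10 : nelsonian_model Wc lec Rc Vpc Vmc /\ Rc_well_defined.
Proof.
  split; [|apply well_defined].
  split; [exact (inhabits (MBS _ _ triv_max))|].
  split; [split; [intros x a; auto| intros x y z H1 H2 a Ha; auto]|].
  split; [intros p x y H; apply H|].
  split; [intros p x y H; apply H|].
  split.
  - intros XY w w' v Hww (phi & E1 & E2 & R).
    destruct (c1 phi w w' v Hww R) as (v' & H1 & H2). exists v'; split; auto. exists phi; auto.
  - intros XY w v v' (phi & E1 & E2 & R) Hvv.
    destruct (c2 phi w v v' R Hvv) as (w' & H1 & H2). exists w'; split; auto. exists phi; auto.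
Qed.
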